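(* Let $(X,Y,R)$ be a random triple with $X\in\mathbb{R}^d$, $Y\in\{0,1\}$, $R\in\{0,1\}$, $P(Y=y,R=r)>0$ for all $y,r$, and with strictly positive conditional Lebesgue densities $p(x\mid Y=y,R=r)$; write $p(x,y\mid R=r)=p(x\mid Y=y,R=r)P(Y=y\mid R=r)$, $p(x\mid R=r)$ for the density of $X$ given $R=r$, and $\eta_1(x)=P(Y=1\mid X=x,R=1)$. Let $T:\mathbb{R}^d\to\mathbb{R}^k$ be measurable, $t=T(x)$, $T=T(X)$, and for $\theta=(\alpha_0,\alpha_1,\beta_0,\beta_1)$ let $$q_\theta(x)=e^{\alpha_1+\beta_1^\top t}p(x,1\mid R=1)+e^{\alpha_0+\beta_0^\top t}p(x,0\mid R=1),\qquad \mathbf{R}(\theta)=\mathrm{KL}\big(p(\cdot\mid R=0);q_\theta\big).$$ Then the problem $$\min_\theta \mathbf{R}(\theta)\quad\text{subject to}\quad \int q_\theta(x)\,dx=1$$ is equivalent to the problem $$\min_\theta \mathbb{E}\big[-\log\{e^{\alpha_1+\beta_1^\top T}\eta_1(X)+e^{\alpha_0+\beta_0^\top T}(1-\eta_1(X))\}\bigm| R=0\big]$$ $$\text{subject to}\quad \mathbb{E}\big[e^{\alpha_1+\beta_1^\top T}\eta_1(X)+e^{\alpha_0+\beta_0^\top T}(1-\eta_1(X))\bigm| R=1\big]=1.$$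
   Context: $\mathrm{KL}(p;q)=\int p(x)\log\{p(x)/q(x)\}\,dx$ is the Kullback–Leibler divergence. $R=1$ indicates that $Y$ is observed and $R=0$ that it is missing. *)

(* Defs.v *)
From HB Require Import structures.
From mathcomp Require Import all_boot all_order all_algebra.
From mathcomp Require Import all_classical all_reals all_analysis.

Set Implicit Arguments.
Unset Strict Implicit.
Unset Printing Implicit Defensive.

Import Order.TTheory GRing.Theory Num.Theory.
Local Open Scope ring_scope.
Local Open Scope classical_set_scope.

(* The sample space R^d is modelled as [d.-tuple R], equipped with the
   library's product (= Borel) sigma-algebra on tuples. *)

(* Lebesgue measure on R^d, characterised (uniquely, on the Borel sets)
   by the volume of closed boxes. *)
Definition is_lebesgue_measure (R : realType) (d : nat)
  (mu : {measure set (d.-tuple R) -> \bar R}) : Prop :=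
  forall a b : d.-tuple R, (forall i, tnth a i <= tnth b i) ->
    mu [set x | forall i, tnth a i <= tnth x i <= tnth b i] =
    (\prod_(i < d) (tnth b i - tnth a i))%:E.

Definition dotk (R : realType) (k : nat) (b t : k.-tuple R) : R :=
  \sum_(i < k) tnth b i * tnth t i.

Record param (R : realType) (k : nat) := Param {
  alpha0 : R; alpha1 : R; beta0 : k.-tuple R; beta1 : k.-tuple R }.

(* Joint law of (X, Y, R): pi y r = P(Y = y, R = r) and
   f y r = conditional Lebesgue density p(x | Y = y, R = r).
   Booleans encode {0,1}: true = 1, false = 0. *)

Definition pXY (R : realType) (T : Type) (pi : bool -> bool -> R)
  (f : bool -> bool -> T -> R) (y r : bool) (x : T) : R :=
  f y r x * (pi y r / (pi false r + pi true r)).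

Definition pX (R : realType) (T : Type) (pi : bool -> bool -> R)
  (f : bool -> bool -> T -> R) (r : bool) (x : T) : R :=
  pXY pi f true r x + pXY pi f false r x.

Definition eta1 (R : realType) (T : Type) (pi : bool -> bool -> R)
  (f : bool -> bool -> T -> R) (x : T) : R :=
  pXY pi f true true x / pX pi f true x.

Definition KL (R : realType) (d : nat) (mu : {measure set (d.-tuple R) -> \bar R})
  (p q : d.-tuple R -> R) : \bar R :=
  (\int[mu]_x (p x * ln (p x / q x))%:E)%E.

Definition condE (R : realType) (d : nat) (mu : {measure set (d.-tuple R) -> \bar R})
  (pi : bool -> bool -> R) (f : bool -> bool -> d.-tuple R -> R) (r : bool)
  (h : d.-tuple R -> R) : \bar R :=
  (\int[mu]_x (h x * pX pi f r x)%:E)%E.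

Definition wt (R : realType) (k : nat) (th : param R k) (y : bool) (t : k.-tuple R) : R :=
  if y then expR (alpha1 th + dotk (beta1 th) t)
  else expR (alpha0 th + dotk (beta0 th) t).

Definition qtheta (R : realType) (d k : nat) (pi : bool -> bool -> R)
  (f : bool -> bool -> d.-tuple R -> R) (T : d.-tuple R -> k.-tuple R)
  (th : param R k) (x : d.-tuple R) : R :=
  wt th true (T x) * pXY pi f true true x + wt th false (T x) * pXY pi f false true x.

Definition gtheta (R : realType) (d k : nat) (pi : bool -> bool -> R)
  (f : bool -> bool -> d.-tuple R -> R) (T : d.-tuple R -> k.-tuple R)
  (th : param R k) (x : d.-tuple R) : R :=
  wt th true (T x) * eta1 pi f x + wt th false (T x) * (1 - eta1 pi f x).

Definition risk1 (R : realType) (d k : nat) (mu : {measure set (d.-tuple R) -> \bar R})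
  (pi : bool -> bool -> R) (f : bool -> bool -> d.-tuple R -> R)
  (T : d.-tuple R -> k.-tuple R) (th : param R k) : \bar R :=
  @KL R d mu (pX pi f false) (qtheta pi f T th).
Definition feasible1 (R : realType) (d k : nat) (mu : {measure set (d.-tuple R) -> \bar R})
  (pi : bool -> bool -> R) (f : bool -> bool -> d.-tuple R -> R)
  (T : d.-tuple R -> k.-tuple R) (th : param R k) : Prop :=
  (\int[mu]_x (qtheta pi f T th x)%:E)%E = 1%:E.

Definition risk2 (R : realType) (d k : nat) (mu : {measure set (d.-tuple R) -> \bar R})
  (pi : bool -> bool -> R) (f : bool -> bool -> d.-tuple R -> R)
  (T : d.-tuple R -> k.-tuple R) (th : param R k) : \bar R :=
  @condE R d mu pi f false (fun x => - ln (gtheta pi f T th x)).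
Definition feasible2 (R : realType) (d k : nat) (mu : {measure set (d.-tuple R) -> \bar R})
  (pi : bool -> bool -> R) (f : bool -> bool -> d.-tuple R -> R)
  (T : d.-tuple R -> k.-tuple R) (th : param R k) : Prop :=
  @condE R d mu pi f true (gtheta pi f T th) = 1%:E.

Definition is_minimizer (R : realType) (k : nat) (J : param R k -> \bar R)
  (C : param R k -> Prop) (th : param R k) : Prop :=
  C th /\ forall th' : param R k, C th' -> (J th <= J th')%E.

(* Main.v *)
Require Import Defs.
From HB Require Import structures.
From mathcomp Require Import all_boot all_order all_algebra.
From mathcomp Require Import all_classical all_reals all_analysis.
From mathcomp Require Import measurable_realfun.
From mathcomp Require Import ring lra.

Import Order.TTheory GRing.Theory Num.Theory.
Local Open Scope ring_scope.
Local Open Scope classical_set_scope.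

Lemma fin_or_inf (R : realType) (x : \bar R) : (0 <= x)%E -> x = +oo%E \/ exists r : R, x = r%:E.
Proof. case: x => [r _|_|] ; [by right; exists r|by left|by []]. Qed.
Arguments fin_or_inf {R x}.

Lemma maxr_ge0' (R : realType) (x : R) : 0 <= Num.max x 0.
Proof. by rewrite le_max lexx orbT. Qed.

Lemma maxr_leD (R : realType) (x y : R) : Num.max (x + y) 0 <= Num.max x 0 + Num.max y 0.
Proof.
rewrite ge_max; apply/andP; split.
  by apply: lerD; rewrite le_max lexx ?orbT.
by apply: addr_ge0; apply: maxr_ge0'.
Qed.

Section gen.
Local Open Scope ereal_scope.
Context d (T : measurableType d) (R : realType).
Variable mu : {measure set T -> \bar R}.

Lemma intD_gen (a b : T -> R) :
  mu.-integrable setT (EFin \o a) -> measurable_fun setT b ->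
  \int[mu]_x ((a x + b x)%R%:E) = \int[mu]_x (a x)%:E + \int[mu]_x (b x)%:E.
Proof.
move=> ia mb.
have mA := measurable_int _ ia.
pose Pos (g : T -> R) := \int[mu]_x (Num.max (g x) 0%R)%:E.
have mR (g : T -> R) : measurable_fun setT (EFin \o g : T -> \bar R) -> measurable_fun setT g.
  by move/measurable_EFinP.
have mPos (g : T -> R) : measurable_fun setT g ->
    measurable_fun setT (fun x => (Num.max (g x) 0%R)%:E).
  move=> mg; rewrite (_ : (fun x => _) = (EFin \o g : T -> \bar R)^\+).
    by apply: measurable_funepos; exact/measurable_EFinP.
  by apply/funext => x; rewrite funeposE /= EFin_max.
have Pos0 (g : T -> R) : 0 <= Pos g.
  by apply: integral_ge0 => x _; rewrite lee_fin maxr_ge0'.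
have hPE (f : T -> \bar R) (g : T -> R) : (forall x, f x = (g x)%:E) ->
    \int[mu]_x f x = Pos g - Pos (fun x => - g x)%R.
  move=> fg; rewrite integralE; congr (_ - _); apply: eq_integral => x _.
    by rewrite funeposE fg EFin_max.
  by rewrite funenegE fg EFin_max.
have ineq (g h k : T -> R) : measurable_fun setT g ->
    measurable_fun setT h -> measurable_fun setT k ->
    (forall x, (Num.max (g x) 0 <= Num.max (h x) 0 + Num.max (k x) 0)%R) ->
    Pos g <= Pos h + Pos k.
  move=> mg mh mk H; rewrite /Pos -ge0_integralD//.
  all: try (by move=> ? _; rewrite lee_fin maxr_ge0').
  all: try (exact: mPos).
  apply: ge0_le_integral => //.
  all: try (by move=> ? _; rewrite lee_fin maxr_ge0').
  all: try (exact: mPos).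
  - by apply: emeasurable_funD; exact: mPos.
  - by move=> x _; rewrite -EFinD lee_fin.
have ma : measurable_fun setT a by exact: mR.
have mNa : measurable_fun setT (fun x => - a x)%R by exact: measurable_funN.
have mNb : measurable_fun setT (fun x => - b x)%R by exact: measurable_funN.
have mS : measurable_fun setT (fun x => a x + b x)%R by exact: measurable_funD.
have mNS : measurable_fun setT (fun x => - (a x + b x))%R by exact: measurable_funN.
have i1 : Pos (fun x => - (a x + b x))%R <= Pos (fun x => - a x)%R + Pos (fun x => - b x)%R.
  by apply: ineq => // x /=; rewrite opprD; exact: maxr_leD.
have i2 : Pos (fun x => a x + b x)%R <= Pos a + Pos b.
  by apply: ineq => // x /=; exact: maxr_leD.
have i3 : Pos b <= Pos (fun x => a x + b x)%R + Pos (fun x => - a x)%R.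
  apply: ineq => // x /=; rewrite {1}(_ : b x = (a x + b x) + - a x)%R; last by ring.
  exact: maxr_leD.
have i4 : Pos (fun x => - b x)%R <= Pos (fun x => - (a x + b x))%R + Pos a.
  apply: ineq => // x /=; rewrite {1}(_ : - b x = - (a x + b x) + a x)%R; last by ring.
  exact: maxr_leD.
have [ap hap] : exists r : R, Pos a = r%:E.
  case: (fin_or_inf (Pos0 a)) => [hinf|h]; last exact: h.
  have := integral_funepos_lt_pinfty measurableT ia.
  have -> : \int[mu]_(x in setT) (EFin \o a)^\+ x = Pos a.
    by apply: eq_integral => x _; rewrite funeposE /= EFin_max.
  by rewrite hinf.
have [an han] : exists r : R, Pos (fun x => - a x)%R = r%:E.
  case: (fin_or_inf (Pos0 (fun x => - a x)%R)) => [hinf|h]; last exact: h.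
  have := integral_funeneg_lt_pinfty measurableT ia.
  have -> : \int[mu]_(x in setT) (EFin \o a)^\- x = Pos (fun x => - a x)%R.
    by apply: eq_integral => x _; rewrite funenegE /= EFin_max.
  by rewrite hinf.
have fin_case : forall bp bn : R, Pos b = bp%:E -> Pos (fun x => - b x)%R = bn%:E ->
    \int[mu]_x ((a x + b x)%R%:E) = \int[mu]_x (a x)%:E + \int[mu]_x (b x)%:E.
  move=> bp bn hbp hbn.
  have ib : mu.-integrable setT (EFin \o b).
    apply/integrableP; split; first exact/measurable_EFinP.
    rewrite (_ : \int[mu]_(x in _) _ = Pos b + Pos (fun x => - b x)%R).
      by rewrite hbp hbn -EFinD ltry.
    rewrite /Pos -ge0_integralD //.
    all: try (by move=> ? _; rewrite lee_fin maxr_ge0').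
    all: try (exact: mPos).
    apply: eq_integral => x _ /=.
    have := congr1 (fun h => h x) (fune_abse (EFin \o b : T -> \bar R)).
    by rewrite /= funeposE funenegE /= !EFin_max => ->.
  under eq_integral do rewrite EFinD.
  exact: integralD.
have [[[bp hbp] [bn hbn]]|hinf] : (exists r : R, Pos b = r%:E) /\ (exists r : R, Pos (fun x => - b x)%R = r%:E) \/
   (Pos b = +oo \/ Pos (fun x => - b x)%R = +oo).
  case: (fin_or_inf (Pos0 b)) => [->|hb]; [by right; left|].
  case: (fin_or_inf (Pos0 (fun x => - b x)%R)) => [->|hn]; [by right; right|by left].
  exact: fin_case hbp hbn.
rewrite (hPE _ (fun x => a x + b x)%R) // (hPE (fun x => (a x)%:E) a) //.
rewrite (hPE (fun x => (b x)%:E) b) //.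
rewrite hap han in i1 i2 i3 i4 *.
move: hinf i1 i2 i3 i4.
case: (fin_or_inf (Pos0 b)) => [->|[? ->]]; case: (fin_or_inf (Pos0 (fun x => - b x)%R)) => [->|[? ->]].
all: case: (fin_or_inf (Pos0 (fun x => a x + b x)%R)) => [->|[? ->]]; case: (fin_or_inf (Pos0 (fun x => - (a x + b x))%R)) => [->|[? ->]].
all: try by [].
all: try by case.
Qed.
End gen.

Theorem lemma9 (R : realType) (d k : nat)
  (mu : {measure set (d.-tuple R) -> \bar R})
  (pi : bool -> bool -> R) (f : bool -> bool -> d.-tuple R -> R)
  (T : d.-tuple R -> k.-tuple R) :
  is_lebesgue_measure mu ->
  (forall y r, 0 < pi y r) ->
  pi false false + pi false true + pi true false + pi true true = 1 ->
  (forall y r, measurable_fun setT (f y r)) ->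
  (forall y r x, 0 < f y r x) ->
  (forall y r, (\int[mu]_x (f y r x)%:E)%E = 1%:E) ->
  measurable_fun setT T ->
  (KL mu (pX pi f false) (pX pi f true) < +oo)%E ->
  (forall th : param R k, feasible1 mu pi f T th <-> feasible2 mu pi f T th) /\
  (exists C : R, forall th : param R k, feasible1 mu pi f T th ->
      risk1 mu pi f T th = (C%:E + risk2 mu pi f T th)%E) /\
  (forall th : param R k,
      is_minimizer (risk1 mu pi f T) (feasible1 mu pi f T) th <->
      is_minimizer (risk2 mu pi f T) (feasible2 mu pi f T) th).
Proof.
move=> _ pi_gt0 _ mf f_gt0 f_int1 mT KLfin.
have pXY_gt0 y r x : 0 < pXY pi f y r x.
  by rewrite /pXY mulr_gt0 // divr_gt0 // addr_gt0.
have p_gt0 r x : 0 < pX pi f r x by rewrite /pX addr_gt0.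
have key th x : gtheta pi f T th x * pX pi f true x = qtheta pi f T th x.
  have := p_gt0 true x; rewrite /gtheta /eta1 /qtheta /pX.
  set u := pXY pi f true true x; set v := pXY pi f false true x => h.
  by field; exact: lt0r_neq0.
have wt_gt0 th y t : 0 < wt th y t by rewrite /wt; case: y; exact: expR_gt0.
have q_gt0 th x : 0 < qtheta pi f T th x.
  by rewrite /qtheta; apply: addr_gt0; apply: mulr_gt0; [exact: wt_gt0|exact: pXY_gt0|exact: wt_gt0|exact: pXY_gt0].
have g_gt0 th x : 0 < gtheta pi f T th x.
  have -> : gtheta pi f T th x = qtheta pi f T th x / pX pi f true x.
    by rewrite -key mulfK // lt0r_neq0.
  by rewrite divr_gt0.
have mpXY y r : measurable_fun setT (pXY pi f y r).
  by rewrite /pXY; apply: measurable_funM => //.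
have mpX r : measurable_fun setT (pX pi f r).
  by rewrite /pX; apply: measurable_funD.
have mwt th y : measurable_fun setT (fun x => wt th y (T x)).
  rewrite /wt; case: y; (apply: measurableT_comp; [exact: measurable_expR|]);
  apply: measurable_funD => //; rewrite /dotk; apply: measurable_sum => i;
  apply: measurable_funM => //; exact: (measurableT_comp (measurable_tnth i) mT).
have mq th : measurable_fun setT (qtheta pi f T th).
  by rewrite /qtheta; apply: measurable_funD; apply: measurable_funM.
have mlnX (h : d.-tuple R -> R) : measurable_fun setT h -> measurable_fun setT (fun x => ln (h x)).
  by move=> mh; apply: measurableT_comp => //; exact: measurable_ln.
have lng th x : ln (gtheta pi f T th x) = ln (qtheta pi f T th x) - ln (pX pi f true x).
  rewrite -(key th x) lnM ?posrE //; ring.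
have lndiv (u v : R) : 0 < u -> 0 < v -> ln (u / v) = ln u - ln v.
  by move=> u0 v0; rewrite ln_div ?posrE.
pose aa x := pX pi f false x * ln (pX pi f false x / pX pi f true x).
pose bb th x := - ln (gtheta pi f T th x) * pX pi f false x.
have maa : measurable_fun setT aa.
  rewrite (_ : aa = fun x => pX pi f false x * (ln (pX pi f false x) - ln (pX pi f true x))).
    by apply: measurable_funM => //; apply: measurable_funB; exact: mlnX.
  by apply/funext => x; rewrite /aa lndiv.
have mbb th : measurable_fun setT (bb th).
  rewrite (_ : bb th = fun x => - (ln (qtheta pi f T th x) - ln (pX pi f true x)) * pX pi f false x).
    apply: measurable_funM => //; apply: measurable_funN; apply: measurable_funB; exact: mlnX.
  by apply/funext => x; rewrite /bb lng.
have intc y (c : R) : 0 <= c -> (\int[mu]_x (f y true x * c)%:E = c%:E)%E.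
  move=> c0; under eq_integral do rewrite EFinM muleC.
  rewrite ge0_integralZl_EFin //.
  - by rewrite f_int1 mule1.
  - by move=> x _; rewrite lee_fin ltW.
  - exact/measurable_EFinP.
have p1int : (\int[mu]_x (pX pi f true x)%:E < +oo)%E.
  rewrite /pX /pXY; under eq_integral do rewrite EFinD.
  rewrite ge0_integralD //.
  - by rewrite !intc ?divr_ge0 ?addr_ge0 ?ltW // -EFinD ltry.
  - by move=> x _; rewrite lee_fin; apply: ltW; exact: (pXY_gt0 true true x).
  - by apply/measurable_EFinP; exact: (mpXY true true).
  - by move=> x _; rewrite lee_fin; apply: ltW; exact: (pXY_gt0 false true x).
  - by apply/measurable_EFinP; exact: (mpXY false true).
have aaN x : - aa x <= pX pi f true x.
  rewrite /aa; have u0 := p_gt0 false x; have v0 := p_gt0 true x.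
  move: u0 v0; set u := pX pi f false x; set v := pX pi f true x => u0 v0.
  have := ln_sublinear (divr_gt0 v0 u0).
  rewrite !lndiv //.
  have : v / u * u = v by rewrite divfK // lt0r_neq0.
  set w := v / u => wu h; nra.
have mA : measurable_fun setT (EFin \o aa : _ -> \bar R) by exact/measurable_EFinP.
have hneg : (\int[mu]_x ((EFin \o aa : _ -> \bar R)^\- x) <= \int[mu]_x (pX pi f true x)%:E)%E.
  apply: ge0_le_integral => //.
  all: try (by move=> ? _; exact: funeneg_ge0).
  all: try (exact: measurable_funeneg).
  all: try (by apply/measurable_EFinP; exact: mpX).
  move=> x _; rewrite funenegE /= ge_max !lee_fin aaN /=.
  exact: ltW.
have ia : mu.-integrable setT (EFin \o aa).
  apply/integrableP; split; first exact: mA.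
  have -> : (\int[mu]_(x in setT) `|(EFin \o aa) x| =
      \int[mu]_x ((EFin \o aa : _ -> \bar R)^\+ x) + \int[mu]_x ((EFin \o aa : _ -> \bar R)^\- x))%E.
    rewrite -ge0_integralD //.
    + apply: eq_integral => x _.
      by move: (congr1 (fun h => h x) (fune_abse (EFin \o aa : _ -> \bar R))) => /= ->.
    all: try (by move=> ? ?; exact: funepos_ge0).
    all: try (by move=> ? ?; exact: funeneg_ge0).
    all: try (exact: measurable_funepos).
    all: try (exact: measurable_funeneg).
  have [n hn] : exists n : R, (\int[mu]_x ((EFin \o aa : _ -> \bar R)^\- x) = n%:E)%E.
    have N0 : (0 <= \int[mu]_x ((EFin \o aa : _ -> \bar R)^\- x))%E.
      by apply: integral_ge0 => x ?; exact: funeneg_ge0.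
    case: (fin_or_inf N0) => [h|h//].
    by move: (le_lt_trans hneg p1int); rewrite h.
  rewrite hn.
  have P0 : (0 <= \int[mu]_x ((EFin \o aa : _ -> \bar R)^\+ x))%E.
    by apply: integral_ge0 => x ?; exact: funepos_ge0.
  case: (fin_or_inf P0) => [h|[p ->]]; last by rewrite -EFinD ltry.
  have KLE : KL mu (pX pi f false) (pX pi f true) = (\int[mu]_x (EFin \o aa) x)%E by [].
  by move: KLfin; rewrite KLE integralE h hn.
have KLE : KL mu (pX pi f false) (pX pi f true) = (\int[mu]_x (EFin \o aa) x)%E by [].
have KLfn : KL mu (pX pi f false) (pX pi f true) \is a fin_num.
  by rewrite KLE; exact: integrable_fin_num.
have hR th : risk1 mu pi f T th = ((fine (KL mu (pX pi f false) (pX pi f true)))%:E + risk2 mu pi f T th)%E.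
  rewrite fineK // KLE /risk1 /KL.
  have -> : (\int[mu]_x ((pX pi f false x * ln (pX pi f false x / qtheta pi f T th x))%:E) =
      \int[mu]_x ((aa x + bb th x)%:E))%E.
    apply: eq_integral => x _; congr EFin; rewrite /aa /bb !lndiv // lng; ring.
  by rewrite intD_gen.
have hF th : feasible1 mu pi f T th <-> feasible2 mu pi f T th.
  rewrite /feasible1 /feasible2 /condE.
  have -> : (\int[mu]_x (qtheta pi f T th x)%:E = \int[mu]_x (gtheta pi f T th x * pX pi f true x)%:E)%E.
    by apply: eq_integral => x _; rewrite key.
  by [].
split; first exact: hF.
split; first by exists (fine (KL mu (pX pi f false) (pX pi f true))) => th _; exact: hR.
move=> th; split.
- move=> [F1 H]; split; first exact/hF.
  move=> th' F2'; have := H th' ((hF th').2 F2').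
  by rewrite !hR leeD2lE.
- move=> [F2 H]; split; first exact/hF.
  move=> th' F1'; have := H th' ((hF th').1 F1').
  by rewrite !hR leeD2lE.
Qed.
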